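(* Let $\mathcal{X}=\mathbb{R}^3$ with the Euclidean topology, partially ordered by the cone $\mathbb{R}^3_+$. There exist a set $\mathcal{A}\subset\mathbb{R}^3$, a linear subspace $\mathcal{M}\subset\mathbb{R}^3$ and a linear functional $\pi:\mathcal{M}\to\mathbb{R}$ such that $(\mathcal{A},\mathcal{M},\pi)$ is admissible (in the sense defined in the context) and the optimal set mapping $E:\mathbb{R}^3\rightrightarrows\mathcal{M}$ fails to be lower semicontinuous at some point $x\in\mathbb{R}^3$, while $E$ nevertheless admits a continuous selection, i.e. there is a continuous map $s:\mathbb{R}^3\to\mathcal{M}$ with $s(x)\in E(x)$ for every $x\in\mathbb{R}^3$.
   Context: Given a set $\mathcal{A}\subset\mathbb{R}^3$ (acceptable positions), a linear subspace $\mathcal{M}\subset\mathbb{R}^3$ (payoffs, with the relative topology) and a linear functional $\pi:\mathcal{M}\to\mathbb{R}$ (price), define the risk measure $\rho:\mathbb{R}^3\to[-\infty,+\infty]$ by $\rho(x)=\inf\{\pi(z)\,;\ z\in\mathcal{M},\ z+x\in\mathcal{A}\}$ and the optimal set mapping $E:\mathbb{R}^3\rightrightarrows\mathcal{M}$ by $E(x)=\{z\in\mathcal{M}\,;\ z+x\in\mathcal{A},\ \pi(z)=\rho(x)\}$. The triple $(\mathcal{A},\mathcal{M},\pi)$ is called admissible if: (R1) $\mathcal{A}$ is closed, convex, contains $0$, and is monotone: $x\in\mathcal{A}$ and $y-x\in\mathbb{R}^3_+$ imply $y\in\mathcal{A}$; (R2) there is no arbitrage: every $z\in\mathcal{M}\cap\mathbb{R}^3_+$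 with $z\neq0$ satisfies $\pi(z)>0$; (R3) $\rho$ is finite-valued and continuous on $\mathbb{R}^3$. The map $E$ is lower semicontinuous at $x$ if for every open set $\mathcal{U}\subset\mathcal{M}$ with $E(x)\cap\mathcal{U}\neq\emptyset$ there is a neighborhood $\mathcal{U}_x$ of $x$ in $\mathbb{R}^3$ such that $E(y)\cap\mathcal{U}\neq\emptyset$ for all $y\in\mathcal{U}_x$. *)

(* Defs.v *)
(* R^3 is 'rV[R]_3 over an arbitrary realType R
   (its canonical topology is the product = Euclidean topology). *)
From HB Require Import structures.
From mathcomp Require Import all_boot all_order all_algebra.
From mathcomp Require Import all_classical all_reals all_analysis.
Set Implicit Arguments. Unset Strict Implicit. Unset Printing Implicit Defensive.
Import Order.TTheory GRing.Theory Num.Theory.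
Import numFieldNormedType.Exports.
Local Open Scope classical_set_scope.
Local Open Scope ring_scope.

Section Defs.
Variable R : realType.
Notation X := 'rV[R]_3.

Definition nonneg_vec (x : X) : Prop := forall i, 0 <= x 0 i.

Definition convex_set3 (A : set X) : Prop :=
  forall x y (t : R), A x -> A y -> 0 <= t -> t <= 1 ->
    A (t *: x + (1 - t) *: y).

Definition monotone_set (A : set X) : Prop :=
  forall x y, A x -> nonneg_vec (y - x) -> A y.

Definition linear_subspace (M : set X) : Prop :=
  M 0 /\ forall (a : R) z1 z2, M z1 -> M z2 -> M (a *: z1 + z2).

(* pi is a linear functional on M: only its values on M matter *)
Definition linear_on (M : set X) (pi : X -> R) : Prop :=
  forall (a : R) z1 z2, M z1 -> M z2 -> pi (a *: z1 + z2) = a * pi z1 + pi z2.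

Definition rho (A M : set X) (pi : X -> R) (x : X) : \bar R :=
  ereal_inf [set (pi z)%:E | z in [set z | M z /\ A (z + x)]].

Definition optimal_set (A M : set X) (pi : X -> R) (x : X) : set X :=
  [set z | M z /\ A (z + x) /\ ((pi z)%:E = rho A M pi x)%E].

Definition admissible (A M : set X) (pi : X -> R) : Prop :=
  [/\ closed A /\ convex_set3 A /\ A 0 /\ monotone_set A,
      (forall z, M z -> nonneg_vec z -> z != 0 -> 0 < pi z) &
      (forall x, rho A M pi x \is a fin_num) /\
                 continuous (fun x => fine (rho A M pi x))].

(* lower semicontinuity at x; open subsets of M for the relative topology
   are the sets M `&` V with V open in R^3 *)
Definition lsc_at (M : set X) (E : X -> set X) (x : X) : Prop :=
  forall U : set X, (exists V : set X, open V /\ U = M `&` V) ->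
    E x `&` U !=set0 ->
    exists Ux : set X, nbhs x Ux /\ forall y, Ux y -> E y `&` U !=set0.

End Defs.

(* Main.v *)
Require Import Defs.
From HB Require Import structures.
From mathcomp Require Import all_boot all_order all_algebra.
From mathcomp Require Import all_classical all_reals all_analysis.
From mathcomp Require Import ring lra.
Import Order.TTheory GRing.Theory Num.Theory.
Import numFieldNormedType.Exports.
Local Open Scope classical_set_scope.
Local Open Scope ring_scope.

Section Ex.
Variable R : realType.
Notation X := 'rV[R]_3.
Definition i0 : 'I_3 := @Ordinal 3 0 isT.
Definition i1 : 'I_3 := @Ordinal 3 1 isT.
Definition i2 : 'I_3 := @Ordinal 3 2 isT.

Lemma ord3 (j : 'I_3) : j = i0 \/ j = i1 \/ j = i2.
Proof.
case: j => [[|[|[|m]]] H].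
- by left; apply/val_inj.
- by right; left; apply/val_inj.
- by right; right; apply/val_inj.
- by [].
Qed.

Definition kk (t : R) : R := (`|t| - t) / 2.

Lemma kk_ge0 t : 0 <= kk t.
Proof. rewrite /kk; have [t0|t0] := leP 0 t; [rewrite ger0_norm|rewrite ltr0_norm]; lra. Qed.

Lemma kk_noninc t u : t <= u -> kk u <= kk t.
Proof.
rewrite /kk => tu; have [t0|t0] := leP 0 t; [rewrite (ger0_norm t0)|rewrite (ltr0_norm t0)];
have [u0|u0] := leP 0 u; [rewrite (ger0_norm u0)|rewrite (ltr0_norm u0)| rewrite (ger0_norm u0)|rewrite (ltr0_norm u0)]; lra.
Qed.

Lemma kk_conv (a b t : R) : 0 <= t -> t <= 1 ->
  kk (t * a + (1 - t) * b) <= t * kk a + (1 - t) * kk b.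
Proof.
move=> t0 t1; rewrite /kk.
have h : `|t * a + (1 - t) * b| <= t * `|a| + (1 - t) * `|b|.
  apply: le_trans (ler_normD _ _) _.
  by rewrite !normrM (ger0_norm t0) (@ger0_norm _ (1 - t)) ?subr_ge0.
lra.
Qed.

Lemma amgm (a r a' r' k k' : R) : 0 <= a -> 0 <= r -> 0 <= a' -> 0 <= r' ->
  0 <= k -> 0 <= k' -> k ^+ 2 <= a * r -> k' ^+ 2 <= a' * r' ->
  2 * k * k' <= a * r' + a' * r.
Proof.
move=> *.
have h1 : k ^+ 2 * k' ^+ 2 <= (a * r) * (a' * r') by apply: ler_pM; rewrite ?exprn_ge0.
have h2 : 4 * ((a * r') * (a' * r)) <= (a * r' + a' * r) ^+ 2.
  have := sqr_ge0 (a * r' - a' * r); nra.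
have h : (2 * k * k') ^+ 2 <= (a * r' + a' * r) ^+ 2.
  apply: le_trans h2; rewrite !exprMn; nra.
rewrite -ler_sqr ?nnegrE; nra.
Qed.


Definition Aset : set X := [set y | 0 <= y ord0 i0 + 1 /\ 0 <= y ord0 i1 + 1 /\
  0 <= y ord0 i0 + y ord0 i1 /\
  kk (y ord0 i2) ^+ 2 <= (y ord0 i0 + 1) * (y ord0 i0 + y ord0 i1)].
Definition Mset : set X := [set z | z ord0 i2 = 0].
Definition piF (z : X) : R := z ord0 i0 + z ord0 i1.
Definition SS (x : X) : R := Num.sqrt (1 + kk (x ord0 i2) ^+ 2).
Definition rhoF (x : X) : R := SS x - 1 - x ord0 i0 - x ord0 i1.
Definition e0 : X := \row_j (if j == i0 then 1 else 0).
Definition e1 : X := \row_j (if j == i1 then 1 else 0).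
Definition sel (x : X) : X := (SS x - x ord0 i0) *: e0 + (-1 - x ord0 i1) *: e1.

Lemma sel0 x : sel x ord0 i0 = SS x - x ord0 i0.
Proof. by rewrite !mxE /= mulr1 mulr0 addr0. Qed.
Lemma sel1 x : sel x ord0 i1 = -1 - x ord0 i1.
Proof. by rewrite !mxE /= mulr1 mulr0 add0r. Qed.
Lemma sel2 x : sel x ord0 i2 = 0.
Proof. by rewrite !mxE /= !mulr0 addr0. Qed.

Lemma SS_ge1 x : 1 <= SS x.
Proof.
rewrite /SS -{1}sqrtr1; apply: ler_wsqrtr.
by rewrite lerDl exprn_ge0 // kk_ge0.
Qed.
Lemma SS_sqr x : SS x ^+ 2 = 1 + kk (x ord0 i2) ^+ 2.
Proof. by rewrite /SS sqr_sqrtr // addr_ge0 // exprn_ge0 // kk_ge0. Qed.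

Lemma lbound_key {p q k : R} : 0 <= p + 1 -> 0 <= q + 1 -> 0 <= p + q ->
  k ^+ 2 <= (p + 1) * (p + q) -> Num.sqrt (1 + k ^+ 2) - 1 <= p + q.
Proof.
move=> h1 h2 h3 h4.
have h : 1 + k ^+ 2 <= (p + q + 1) ^+ 2 by nra.
have := ler_wsqrtr h; rewrite sqrtr_sqr ger0_norm; first lra.
lra.
Qed.

Lemma rhoE x : rho Aset Mset piF x = (rhoF x)%:E.
Proof.
apply/eqP; rewrite eq_le; apply/andP; split.
- apply: ereal_inf_lbound; exists (sel x).
    split; first exact: sel2.
    have E i : (sel x + x) ord0 i = sel x ord0 i + x ord0 i by rewrite mxE.
    rewrite /Aset /= !E sel0 sel1 sel2 add0r.
    have := SS_ge1 x; have := SS_sqr x; nra.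
  by rewrite /piF sel0 sel1 /rhoF; congr (_%:E); lra.
- apply: le_ereal_inf_tmp => _ [z [Mz [h1 [h2 [h3 h4]]]] <-].
  rewrite lee_fin /rhoF /piF.
  move: h1 h2 h3 h4; rewrite !mxE => h1 h2 h3 h4.
  have := lbound_key h1 h2 h3 h4.
  move: Mz; rewrite /Mset /= => ->; rewrite add0r /SS; lra.
Qed.


Lemma ccoord i : continuous (fun y : X => y ord0 i).
Proof. exact: coord_continuous. Qed.

Lemma kk_cont : continuous kk.
Proof.
move=> t; rewrite /kk.
apply: (continuousM (s:=fun t : R => `|t| - t) (t:=fun _ => 2^-1)); last exact: cst_continuous.
apply: (continuousB (f:=fun t : R => `|t|) (g:=id)); last by move=> ?; exact: cvg_id.
exact: norm_continuous.
Qed.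

Lemma kk2_cont : continuous (fun y : X => kk (y ord0 i2)).
Proof.
move=> y; apply: (@continuous_comp _ _ _ (fun y : X => y ord0 i2) kk).
  exact: ccoord.
exact: kk_cont.
Qed.

Lemma closed_nonneg (g : X -> R) : continuous g -> closed [set y | 0 <= g y].
Proof.
move=> gc; have -> : [set y | 0 <= g y] = g @^-1` [set t | 0 <= t] by [].
apply: preimage_closed; last exact: closed_ge.
by move=> y _; exact: gc.
Qed.

Lemma closedA : closed Aset.
Proof.
have -> : Aset = [set y | 0 <= y ord0 i0 + 1] `&` ([set y | 0 <= y ord0 i1 + 1] `&`
   ([set y | 0 <= y ord0 i0 + y ord0 i1] `&`
    [set y | 0 <= (y ord0 i0 + 1) * (y ord0 i0 + y ord0 i1) - kk (y ord0 i2) ^+ 2])).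
  by apply: funext => y /=; rewrite subr_ge0.
apply: closedI; [|apply: closedI; [|apply: closedI]]; apply: closed_nonneg => y.
- apply: continuousD; [exact: ccoord|exact: cst_continuous].
- apply: continuousD; [exact: ccoord|exact: cst_continuous].
- apply: continuousD; exact: ccoord.
- apply: (continuousB (f:=fun y : X => (y ord0 i0 + 1) * (y ord0 i0 + y ord0 i1))
     (g:=fun y : X => kk (y ord0 i2) ^+ 2)).
    apply: (continuousM (s:=fun y : X => (y ord0 i0 + 1)) (t:=fun y : X => (y ord0 i0 + y ord0 i1))).
      apply: continuousD; [exact: ccoord|exact: cst_continuous].
    apply: continuousD; exact: ccoord.
  rewrite /GRing.exp /=.
  apply: (continuousM (s:=fun y : X => kk (y ord0 i2)) (t:=fun y : X => kk (y ord0 i2))); exact: kk2_cont.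
Qed.


Lemma convA : convex_set3 Aset.
Proof.
move=> x y t [a1 [a2 [a3 a4]]] [b1 [b2 [b3 b4]]] t0 t1.
have E i : (t *: x + (1 - t) *: y) ord0 i = t * x ord0 i + (1 - t) * y ord0 i.
  by rewrite !mxE.
rewrite /Aset /= !E.
set x0 := x ord0 i0 in a1 a3 a4 *; set x1 := x ord0 i1 in a2 a3 a4 *.
set y0 := y ord0 i0 in b1 b3 b4 *; set y1 := y ord0 i1 in b2 b3 b4 *.
have hK := @kk_conv (x ord0 i2) (y ord0 i2) t t0 t1.
have hK0 := kk_ge0 (t * x ord0 i2 + (1 - t) * y ord0 i2).
set K := kk _ in hK hK0 *.
have k0 := kk_ge0 (x ord0 i2); have k0' := kk_ge0 (y ord0 i2).
set k := kk (x ord0 i2) in a4 hK k0 *; set k' := kk (y ord0 i2) in b4 hK k0' *.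
have hm := amgm _ _ _ _ _ _ a1 a3 b1 b3 k0 k0' a4 b4.
have u0 : 0 <= 1 - t by lra.
split; first nra.
split; first nra.
split; first nra.
have hT : K ^+ 2 <= (t * k + (1 - t) * k') ^+ 2.
  rewrite ler_sqr ?nnegrE //; nra.
apply: le_trans hT _.
have e1 := ler_wpM2l (sqr_ge0 t) a4.
have e2 := ler_wpM2l (sqr_ge0 (1 - t)) b4.
have e3 := ler_wpM2l (mulr_ge0 t0 u0) hm.
nra.
Qed.

Lemma monoA : monotone_set Aset.
Proof.
move=> x y [a1 [a2 [a3 a4]]] h.
have E i : 0 <= y ord0 i - x ord0 i by have := h i; rewrite !mxE.
have h0 := E i0; have h1 := E i1; have h2 := E i2.
rewrite /Aset /=.
have hk := kk_noninc (x ord0 i2) (y ord0 i2) ltac:(lra).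
have k0 := kk_ge0 (y ord0 i2).
have hk2 : kk (y ord0 i2) ^+ 2 <= kk (x ord0 i2) ^+ 2 by rewrite ler_sqr ?nnegrE ?kk_ge0.
split; first lra. split; first lra. split; first lra.
apply: le_trans hk2 _; apply: le_trans a4 _.
apply: ler_pM; lra.
Qed.

Lemma A0 : Aset 0.
Proof.
rewrite /Aset /= !mxE /kk normr0; split; first lra; split; first lra; split; first lra.
rewrite subr0 mul0r expr2 mul0r; lra.
Qed.


Lemma linM : linear_subspace Mset.
Proof.
split; first by rewrite /Mset /= mxE.
by move=> a z1 z2; rewrite /Mset /= !mxE => -> ->; rewrite mulr0 addr0.
Qed.

Lemma linpi : linear_on Mset piF.
Proof. by move=> a z1 z2 _ _; rewrite /piF !mxE; ring. Qed.

Lemma noarb z : Mset z -> nonneg_vec z -> z != 0 -> 0 < piF z.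
Proof.
move=> Mz nz zn0.
have h0 : 0 <= z ord0 i0 := nz i0.
have h1 : 0 <= z ord0 i1 := nz i1.
rewrite ltNge; apply/negP => hle; move/negP: zn0; apply; apply/eqP/rowP => j.
rewrite mxE; rewrite /piF in hle.
case: (ord3 j) => [->|[->|->]]; [lra|lra|exact: Mz].
Qed.

Lemma SS_cont : continuous SS.
Proof.
move=> y; apply: (@continuous_comp _ _ _ (fun y : X => 1 + kk (y ord0 i2) ^+ 2) (@Num.sqrt R)); last exact: sqrt_continuous.
apply: continuousD; first exact: cst_continuous.
rewrite /GRing.exp /=.
apply: (continuousM (s:=fun y : X => kk (y ord0 i2)) (t:=fun y : X => kk (y ord0 i2))); exact: kk2_cont.
Qed.

Lemma rhoF_cont : continuous rhoF.
Proof.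
move=> y; rewrite /rhoF.
apply: (continuousB (f:=fun y : X => SS y - 1 - y ord0 i0) (g:=fun y : X => y ord0 i1)); last exact: ccoord.
apply: (continuousB (f:=fun y : X => SS y - 1) (g:=fun y : X => y ord0 i0)); last exact: ccoord.
apply: (continuousB (f:=SS) (g:=fun _ => 1)); [exact: SS_cont|exact: cst_continuous].
Qed.

Lemma sel_cont : continuous sel.
Proof.
move=> y; rewrite /sel.
apply: (continuousD (f:=fun y : X => (SS y - y ord0 i0) *: e0) (g:=fun y : X => (-1 - y ord0 i1) *: e1)).
  apply: (continuousZr_tmp (s:=fun y : X => SS y - y ord0 i0)).
  apply: (continuousB (f:=SS) (g:=fun y : X => y ord0 i0)); [exact: SS_cont|exact: ccoord].
apply: (continuousZr_tmp (s:=fun y : X => -1 - y ord0 i1)).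
apply: continuousB; [exact: cst_continuous|exact: ccoord].
Qed.

Lemma admA : admissible Aset Mset piF.
Proof.
split.
- by split; [exact: closedA|split; [exact: convA|split; [exact: A0|exact: monoA]]].
- exact: noarb.
- split; first by move=> x; rewrite rhoE.
  have -> : (fun x => fine (rho Aset Mset piF x)) = rhoF.
    by apply: funext => x; rewrite rhoE.
  exact: rhoF_cont.
Qed.

Lemma sel_opt x : optimal_set Aset Mset piF x (sel x).
Proof.
split; first exact: sel2.
have E i : (sel x + x) ord0 i = sel x ord0 i + x ord0 i by rewrite mxE.
rewrite /Aset /= !E sel0 sel1 sel2 add0r rhoE /piF sel0 sel1 /rhoF.
split; first by have := SS_ge1 x; have := SS_sqr x; nra.
congr (_%:E); lra.
Qed.


Definition e2 : X := \row_j (if j == i2 then 1 else 0).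

Lemma not_lsc : ~ lsc_at Mset (optimal_set Aset Mset piF) 0.
Proof.
move=> H.
pose V := [set y : X | y ord0 i0 < 0].
have oV : open V.
  have := (continuousP (fun y : X => y ord0 i0)).1 (ccoord i0) _ (open_lt (y:=0)). by [].
pose w : X := - e0 + e1.
have w0 : w ord0 i0 = -1 by rewrite !mxE /=; lra.
have w1 : w ord0 i1 = 1 by rewrite !mxE /=; lra.
have w2 : w ord0 i2 = 0 by rewrite !mxE /=; lra.
have kk0 : kk 0 = 0 by rewrite /kk normr0 subr0 mul0r.
have hE : optimal_set Aset Mset piF 0 `&` (Mset `&` V) !=set0.
  exists w; split; last by split; [exact: w2|rewrite /V /= w0; lra].
  split; first exact: w2.
  rewrite addr0 /Aset /= rhoE /piF /rhoF /SS w0 w1 w2 !mxE kk0.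
  rewrite expr2 mul0r addr0 sqrtr1; split; first lra.
  by rewrite addNr subrr !subr0.
have [Ux [nUx HUx]] := H (Mset `&` V) (ex_intro _ V (conj oV erefl)) hE.
pose f := fun t : R => (- t) *: e2.
have fc : {for 0, continuous f}.
  apply: (continuousZr_tmp (s:=fun t : R => - t)).
  apply: continuousN; by move=> ?; exact: cvg_id.
have nUx' : nbhs (f 0) Ux by rewrite /f oppr0 scale0r.
have /nbhs_ballP [d d0 hd] := fc Ux nUx'.
move: d0 => /= d0.
have bd : ball (0 : R) d (d / 2).
  rewrite /ball /= sub0r normrN ger0_norm; lra.
have [z [[Mz [Az piz]] [_ Vz]]] := HUx (f (d / 2)) (hd _ bd).
set y := f (d / 2) in Az piz.
have y0 : y ord0 i0 = 0 by rewrite !mxE /=; lra.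
have y1 : y ord0 i1 = 0 by rewrite !mxE /=; lra.
have y2 : y ord0 i2 = - (d / 2) by rewrite !mxE /=; lra.
have ky : kk (y ord0 i2) = d / 2.
  rewrite y2 /kk normrN ger0_norm; lra.
have E i : (z + y) ord0 i = z ord0 i + y ord0 i by rewrite mxE.
move: Mz; rewrite /Mset /= => Mz.
move: Az; rewrite /Aset /= !E y0 y1 Mz add0r ky !addr0 => -[a1 [a2 [a3 a4]]].
move: piz; rewrite rhoE /piF /rhoF y0 y1 !subr0 => -[pz].
have s1 := SS_ge1 y; have s2 := SS_sqr y; rewrite ky in s2.
have s3 : 1 < SS y.
  rewrite lt_neqAle s1 andbT; apply/eqP => h; rewrite -h in s2; nra.
rewrite /V /= in Vz.
nra.
Qed.

End Ex.

Theorem mainTheorem1 (R : realType) :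
  exists (A M : set 'rV[R]_3) (pi : 'rV[R]_3 -> R),
    linear_subspace M /\ linear_on M pi /\ admissible A M pi /\
    (exists x : 'rV[R]_3, ~ lsc_at M (optimal_set A M pi) x) /\
    (exists s : 'rV[R]_3 -> 'rV[R]_3,
        continuous s /\ forall x, optimal_set A M pi x (s x)).
Proof.
exists (Aset R), (Mset R), (piF R).
split; first exact: linM.
split; first exact: linpi.
split; first exact: admA.
split; first by exists 0; exact: not_lsc.
by exists (@sel R); split; [exact: sel_cont|exact: sel_opt].
Qed.
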